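(* Suppose $P=P_{(a,b)}$ is a point of $\mathcal X_3$ such that $\alpha(P)^2-\alpha(P)+1=0$. Then for every positive integer $i$ with $i\le m-2$ there exists a function $g_i\in L((3i+3)D_\infty)$ with $v_P(g_i)=3i+2$.
   Context: Let $q$ be a prime power with $q\equiv2\pmod3$, $m=(q+1)/3$, and let $\mathcal X_3$ be the nonsingular projective model (defined over $\mathbb F_{q^2}$) of the plane curve $y^{q+1}+x^{2m}+x^m=0$. Let $P_\infty^1,\dots,P_\infty^m$ be the $m$ points of $\mathcal X_3$ lying over the point at infinity (poles of $x$), $D_\infty=\sum_jP_\infty^j$, and $L(D)$ the Riemann–Roch space of $D$. Points not centered at $(0,0)$ or at infinity have affine coordinates $(a,b)$, $a\ne0$, and are denoted $P_{(a,b)}$; for such points with $a^m\neq -1$, $\alpha(P_{(a,b)})=a^m/(1+a^m)$. $v_P$ is the valuation at $P$. *)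

(* Defs.v *)
From HB Require Import structures.
From mathcomp Require Import all_boot all_order all_algebra all_field.
Set Implicit Arguments. Unset Strict Implicit. Unset Printing Implicit Defensive.
Import Order.TTheory GRing.Theory Num.Theory.
Local Open Scope ring_scope.

(* Evaluation of a bivariate polynomial A(X,Y) in {poly {poly K}}
   (outer variable = Y, inner = X) at (x,y) in a field F over K. *)
Definition eval2 (K F : fieldType) (iota : {rmorphism K -> F}) (x y : F)
  (A : {poly {poly K}}) : F :=
  (map_poly (fun c : {poly K} => (map_poly iota c).[x]) A).[y].

(* F = K(x,y) is the function field of the curve y^(q+1) + x^(2m) + x^m = 0:
   x is transcendental over K, (x,y) satisfies the equation, and F is
   generated over K by x and y. *)
Definition curve_function_field (K F : fieldType) (iota : {rmorphism K -> F})
  (x y : F) (q m : nat) : Prop :=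
  [/\ forall P : {poly K}, P != 0 -> (map_poly iota P).[x] != 0,
      y ^+ q.+1 + x ^+ (2 * m) + x ^+ m = 0
    & forall g : F, exists A B : {poly {poly K}},
        eval2 iota x y B != 0 /\ g = eval2 iota x y A / eval2 iota x y B].

(* A place (point of the nonsingular model) of F/K, given by its normalized
   discrete valuation v : F -> Z, trivial on K (the value at 0 is irrelevant;
   v(0) = +oo by convention and is never used). *)
Definition is_place (K F : fieldType) (iota : {rmorphism K -> F})
  (v : F -> int) : Prop :=
  [/\ forall a b : F, a != 0 -> b != 0 -> v (a * b) = v a + v b,
      forall a b : F, a != 0 -> b != 0 -> a + b != 0 ->
        Num.min (v a) (v b) <= v (a + b),
      forall c : K, c != 0 -> v (iota c) = 0
    & exists t : F, t != 0 /\ v t = 1].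

(* g in L(k D_oo), where D_oo is the sum of the places that are poles of x. *)
Definition in_L_kDinf (K F : fieldType) (iota : {rmorphism K -> F}) (x : F)
  (k : nat) (g : F) : Prop :=
  g = 0 \/
  forall w : F -> int, is_place iota w ->
    (if w x < 0 then - (k%:Z) <= w g else 0 <= w g).

(* Main.v *)
Require Import Defs.
From HB Require Import structures.
From mathcomp Require Import all_boot all_order all_algebra all_field.
From mathcomp Require Import zify ring.
Import Order.TTheory GRing.Theory Num.Theory.
Local Open Scope ring_scope.

Module Helpers.
Set Implicit Arguments. Unset Strict Implicit. Unset Printing Implicit Defensive.

Definition vge (F : fieldType) (w : F -> int) (f : F) (N : int) : Prop :=
  f = 0 \/ N <= w f.

Section Val.
Variables (K F : fieldType) (iota : {rmorphism K -> F}) (w : F -> int).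
Hypothesis Hw : is_place iota w.

Lemma wM a b : a != 0 -> b != 0 -> w (a * b) = w a + w b.
Proof. by case: Hw => h1 h2 h3 h4; auto. Qed.

Lemma wC c : c != 0 -> w (iota c) = 0.
Proof. by case: Hw => h1 h2 h3 h4; auto. Qed.

Lemma wmin a b : a != 0 -> b != 0 -> a + b != 0 -> Num.min (w a) (w b) <= w (a + b).
Proof. by case: Hw => h1 h2 h3 h4; auto. Qed.

Lemma w1 : w 1 = 0.
Proof. by rewrite -(rmorph1 iota) wC ?oner_neq0. Qed.

Lemma wN a : a != 0 -> w (- a) = w a.
Proof.
move=> a0; have -> : - a = iota (-1) * a by rewrite rmorphN1 mulN1r.
have h : (-1 : K) != 0 by rewrite oppr_eq0 oner_neq0.
by rewrite wM ?wC ?add0r // fmorph_eq0.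
Qed.

Lemma wV a : a != 0 -> w (a^-1) = - w a.
Proof.
move=> a0; have := wM a0 (invr_neq0 a0); rewrite mulfV // w1.
move=> h; apply/eqP; rewrite -(subr0 (w a^-1)) h; apply/eqP; ring.
Qed.

Lemma wX a n : a != 0 -> w (a ^+ n) = (n%:Z) * w a.
Proof.
move=> a0; elim: n => [|n IH]; first by rewrite expr0 w1 mul0r.
by rewrite exprS wM ?expf_neq0 // IH -addn1 PoszD mulrDl mul1r addrC.
Qed.

Lemma vge_le f N M : vge w f N -> M <= N -> vge w f M.
Proof. by case=> [->|h] hMN; [left|right; apply: le_trans hMN h]. Qed.

Lemma vge0 N : vge w 0 N.
Proof. by left. Qed.

Lemma vgeC c : vge w (iota c) 0.
Proof. by have [->|c0] := eqVneq c 0; [left; rewrite rmorph0|right; rewrite wC]. Qed.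

Lemma vgeN f N : vge w f N -> vge w (- f) N.
Proof.
case=> [->|h]; first by left; rewrite oppr0.
have [->|f0] := eqVneq f 0; first by left; rewrite oppr0.
by right; rewrite wN.
Qed.

Lemma vgeD f g N : vge w f N -> vge w g N -> vge w (f + g) N.
Proof.
case=> [->|hf]; first by rewrite add0r.
case=> [->|hg]; first by rewrite addr0; right.
have [->|f0] := eqVneq f 0; first by rewrite add0r; right.
have [->|g0] := eqVneq g 0; first by rewrite addr0; right.
have [->|fg0] := eqVneq (f + g) 0; first by left.
right; apply: le_trans (wmin f0 g0 fg0).
by rewrite le_min hf hg.
Qed.

Lemma vgeB f g N : vge w f N -> vge w g N -> vge w (f - g) N.
Proof. by move=> hf hg; apply: vgeD => //; apply: vgeN. Qed.

Lemma vgeM f g N M : vge w f N -> vge w g M -> vge w (f * g) (N + M).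
Proof.
case=> [->|hf]; first by rewrite mul0r; left.
case=> [->|hg]; first by rewrite mulr0; left.
have [->|f0] := eqVneq f 0; first by rewrite mul0r; left.
have [->|g0] := eqVneq g 0; first by rewrite mulr0; left.
by right; rewrite wM // lerD.
Qed.

Lemma vgeX f N n : vge w f N -> vge w (f ^+ n) (n%:Z * N).
Proof.
move=> hf; elim: n => [|n IH]; first by rewrite expr0 mul0r; right; rewrite w1.
rewrite exprS; have := vgeM hf IH; rewrite -addn1 PoszD mulrDl mul1r addrC.
by [].
Qed.

Lemma vge_sum (I : Type) (r : seq I) (P : pred I) (E : I -> F) N :
  (forall i, P i -> vge w (E i) N) -> vge w (\sum_(i <- r | P i) E i) N.
Proof.
move=> h; apply: (big_ind (fun z => vge w z N)); first exact: vge0.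
  by move=> x y; apply: vgeD.
exact: h.
Qed.

Lemma vge_w f N : f != 0 -> vge w f N -> N <= w f.
Proof. by move=> f0 [f0'|//]; rewrite f0' eqxx in f0. Qed.

Lemma w_strict a b : a != 0 -> vge w b (w a + 1) -> a + b != 0 /\ w (a + b) = w a.
Proof.
move=> a0 hb.
have [->|b0] := eqVneq b 0; first by rewrite addr0.
have hb' := vge_w b0 hb.
have ab0 : a + b != 0.
  apply/negP => /eqP ab; have eb : b = - a by apply/eqP; rewrite -addr_eq0 addrC ab.
  by move: hb'; rewrite eb wN //; lia.
split=> //.
have h1 := wmin a0 b0 ab0.
have h2 : Num.min (w (a + b)) (w (- b)) <= w (a + b - b).
  by apply: wmin; rewrite ?oppr_eq0 // addrK.
rewrite addrK wN // in h2.
move: h1 h2; rewrite !ge_min => /orP[] h1 /orP[] h2; lia.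
Qed.

Lemma vge_const c : vge w (iota c) 1 -> c = 0.
Proof.
case=> [/eqP|]; first by rewrite fmorph_eq0 => /eqP.
by have [->//|c0] := eqVneq c 0; rewrite wC.
Qed.


Lemma powdiff f g N n : vge w f 0 -> vge w g 0 -> vge w (f - g) N ->
  vge w (f ^+ n - g ^+ n) N.
Proof.
move=> hf hg hfg; elim: n => [|n IH]; first by rewrite !expr0 subrr; left.
have -> : f ^+ n.+1 - g ^+ n.+1 = f * (f ^+ n - g ^+ n) + (f - g) * g ^+ n.
  by rewrite !exprS; ring.
apply: vgeD.
  by have := vgeM hf IH; rewrite add0r.
by have := vgeM hfg (vgeX n hg); rewrite mulr0 addr0.
Qed.

Lemma frobdiff p f g N n : p \in [pchar F] -> vge w (f - g) N ->
  vge w (f ^+ (p ^ n) - g ^+ (p ^ n)) ((p ^ n)%N%:Z * N).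
Proof.
move=> hp hfg.
have e : f ^+ (p ^ n) = (f - g) ^+ (p ^ n) + g ^+ (p ^ n).
  rewrite -exprDn_pchar ?subrK //.
  rewrite (eq_pnat _ (pcharf_eq hp)) pnatX pnat_id //.
  by case/andP: hp.
by rewrite e addrK; apply: vgeX.
Qed.


Lemma hornerdiff z c (B : {poly K}) : vge w z 0 -> vge w (z - iota c) 1 ->
  vge w ((map_poly iota B).[z] - iota B.[c]) 1.
Proof.
move=> hz hzc; elim/poly_ind: B => [|B e IH].
  by rewrite map_poly0 !horner0 rmorph0 subrr; left.
rewrite rmorphD rmorphM /= map_polyX map_polyC /= !hornerMXaddC rmorphD rmorphM /=.
have -> : (map_poly iota B).[z] * z + iota e - (iota B.[c] * iota c + iota e) =
  ((map_poly iota B).[z] - iota B.[c]) * z + iota B.[c] * (z - iota c) by ring.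
apply: vgeD; first by have := vgeM IH hz; rewrite addr0.
by have := vgeM (vgeC B.[c]) hzc; rewrite add0r.
Qed.

Lemma polyval z c (A : {poly K}) : vge w z 0 -> vge w (z - iota c) 1 ->
  z - iota c != 0 -> (map_poly iota A).[z] != 0 ->
  exists k : nat, w ((map_poly iota A).[z]) = k%:Z * w (z - iota c).
Proof.
move=> hz hzc hT hA.
case: (multiplicity_XsubC A c) => k [A2 hA2 eA].
have A0 : A != 0 by apply: contraNneq hA => ->; rewrite map_poly0 horner0.
rewrite A0 /= in hA2.
exists k; rewrite eA rmorphM rmorphXn /= map_polyXsubC hornerM horner_exp hornerXsubC.
have a0 : iota A2.[c] != 0 by rewrite fmorph_eq0.
have hd := hornerdiff A2 hz hzc.
have hd' : vge w ((map_poly iota A2).[z] - iota A2.[c]) (w (iota A2.[c]) + 1).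
  by rewrite wC // add0r.
have [h1 h2] := w_strict a0 hd'.
rewrite addrC subrK in h1 h2.
by rewrite wM ?expf_neq0 // h2 wC // add0r wX.
Qed.


Definition ev (z : F) (P : {poly K}) := (map_poly iota P).[z].

Lemma evD z P Q : ev z (P + Q) = ev z P + ev z Q.
Proof. by rewrite /ev rmorphD hornerD. Qed.
Lemma evM z P Q : ev z (P * Q) = ev z P * ev z Q.
Proof. by rewrite /ev rmorphM hornerM. Qed.
Lemma evN z P : ev z (- P) = - ev z P.
Proof. by rewrite /ev rmorphN hornerN. Qed.
Lemma evC z c : ev z c%:P = iota c.
Proof. by rewrite /ev map_polyC hornerC. Qed.
Lemma evX z : ev z 'X = z.
Proof. by rewrite /ev map_polyX hornerX. Qed.

Definition Srat z s := exists A B : {poly K}, ev z B != 0 /\ s = ev z A / ev z B.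

Lemma SratP z A : Srat z (ev z A).
Proof.
exists A, 1; have -> : ev z 1 = 1 by rewrite /ev rmorph1 hornerC.
by rewrite oner_neq0 divr1.
Qed.

Lemma SratC z c : Srat z (iota c).
Proof. by rewrite -(evC z c); apply: SratP. Qed.

Lemma Srat_z z : Srat z z.
Proof. by have := SratP z 'X; rewrite evX. Qed.

Lemma SratD z s t : Srat z s -> Srat z t -> Srat z (s + t).
Proof.
move=> [A1 [B1 [b1 ->]]] [A2 [B2 [b2 ->]]].
exists (A1 * B2 + A2 * B1), (B1 * B2); rewrite !evD !evM mulf_neq0 //; split=> //.
by field; apply/andP.
Qed.

Lemma SratN z s : Srat z s -> Srat z (- s).
Proof.
move=> [A1 [B1 [b1 ->]]]; exists (- A1), B1; rewrite evN; split=> //.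
by rewrite mulNr.
Qed.

Lemma SratM z s t : Srat z s -> Srat z t -> Srat z (s * t).
Proof.
move=> [A1 [B1 [b1 ->]]] [A2 [B2 [b2 ->]]].
exists (A1 * A2), (B1 * B2); rewrite !evM mulf_neq0 //; split=> //.
by field; apply/andP.
Qed.

Lemma SratV z s : Srat z s -> Srat z (s^-1).
Proof.
move=> [A1 [B1 [b1 ->]]].
have [a0|a0] := eqVneq (ev z A1) 0.
  by rewrite a0 mul0r invr0 -(rmorph0 iota); exact: SratC.
exists B1, A1; split=> //; by rewrite invfM invrK mulrC.
Qed.

Lemma Srat_val z c s : vge w z 0 -> vge w (z - iota c) 1 -> z - iota c != 0 ->
  s != 0 -> Srat z s -> exists k : int, w s = k * w (z - iota c).
Proof.
move=> hz hzc hT s0 [A [B [b0 es]]].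
have a0 : ev z A != 0 by apply: contraNneq s0 => a0; rewrite es a0 mul0r.
have [ka hka] := polyval hz hzc hT a0.
have [kb hkb] := polyval hz hzc hT b0.
exists (ka%:Z - kb%:Z); rewrite es wM ?invr_neq0 // wV //.
rewrite /ev in hka hkb; rewrite /ev hka hkb; ring.
Qed.

Definition approx z f := forall N : nat, exists s, Srat z s /\ vge w (f - s) N%:Z.

Lemma approx_val z c f : vge w z 0 -> vge w (z - iota c) 1 -> z - iota c != 0 ->
  f != 0 -> approx z f -> exists k : int, w f = k * w (z - iota c).
Proof.
move=> hz hzc hT f0 hf.
have [s [hs hfs]] := hf (absz (w f)).+1.
have hfs' : vge w (- (f - s)) (w f + 1).
  apply: vgeN; apply: (vge_le hfs); rewrite -addn1 PoszD; lia.
have [h1 h2] := w_strict f0 hfs'.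
rewrite opprB addrC subrK in h1 h2.
have [k hk] := Srat_val hz hzc hT h1 hs.
by exists k; rewrite -h2.
Qed.


Lemma approxS z s : Srat z s -> approx z s.
Proof. by move=> hs N; exists s; split=> //; rewrite subrr; left. Qed.

Lemma approxD z f g : approx z f -> approx z g -> approx z (f + g).
Proof.
move=> hf hg N; have [s [hs h1]] := hf N; have [t [ht h2]] := hg N.
exists (s + t); split; first exact: SratD.
have -> : f + g - (s + t) = (f - s) + (g - t) by ring.
exact: vgeD.
Qed.

Lemma approxN z f : approx z f -> approx z (- f).
Proof.
move=> hf N; have [s [hs h1]] := hf N.
exists (- s); split; first exact: SratN.
by rewrite -opprD; apply: vgeN.
Qed.

Lemma approxM z f g : vge w f 0 -> vge w g 0 -> approx z f -> approx z g ->
  approx z (f * g).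
Proof.
move=> f0 g0 hf hg N; have [s [hs h1]] := hf N; have [t [ht h2]] := hg N.
exists (s * t); split; first exact: SratM.
have t0 : vge w t 0.
  have -> : t = g - (g - t) by ring.
  by apply: vgeB => //; apply: (vge_le h2).
have -> : f * g - s * t = f * (g - t) + (f - s) * t by ring.
apply: vgeD; first by have := vgeM f0 h2; rewrite add0r.
by have := vgeM h1 t0; rewrite addr0.
Qed.

Lemma approxV z f : f != 0 -> w f = 0 -> approx z f -> approx z f^-1.
Proof.
move=> f0 wf hf N; have [s [hs h1]] := hf N.+1.
have h1' : vge w (- (f - s)) (w f + 1).
  by apply: vgeN; rewrite wf add0r; apply: (vge_le h1); lia.
have [s0 ws] := w_strict f0 h1'.
rewrite opprB addrC subrK in s0 ws.
exists s^-1; split; first exact: SratV.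
have -> : f^-1 - s^-1 = (s - f) * (f * s)^-1 by field; apply/andP.
have hi : vge w (f * s)^-1 0 by right; rewrite wV ?mulf_neq0 // wM // ws wf.
have := vgeM (vgeN h1) hi; rewrite opprB addr0 => h.
by apply: (vge_le h); lia.
Qed.

Lemma approx_iter z f (Phi : F -> F) :
  (exists s, Srat z s /\ vge w (f - s) 1) ->
  (forall s (k : nat), Srat z s -> vge w (f - s) k%:Z -> (0 < k)%N ->
     Srat z (Phi s) /\ vge w (f - Phi s) k.+1%:Z) -> approx z f.
Proof.
move=> [s0 [hs0 h0]] hstep.
suff H : forall N : nat, exists s, Srat z s /\ vge w (f - s) N.+1%:Z.
  move=> N; have [s [hs h]] := H N; exists s; split=> //.
  by apply: (vge_le h); lia.
elim=> [|N [s [hs h]]]; first by exists s0.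
by exists (Phi s); apply: hstep.
Qed.


Lemma eval2_ind (x y : F) (Q : F -> Prop) :
  Q 0 -> (forall c, Q (iota c)) -> (forall f g, Q f -> Q g -> Q (f + g)) ->
  (forall f, Q f -> Q (f * x)) -> (forall f, Q f -> Q (f * y)) ->
  forall A, Q (eval2 iota x y A).
Proof.
move=> Q0 QC QD Qx Qy.
have cf : commr_rmorph iota x by move=> t; apply: mulrC.
have inner : forall c : {poly K}, Q ((map_poly iota c).[x]).
  elim/poly_ind=> [|c e IH]; first by rewrite map_poly0 horner0.
  rewrite rmorphD rmorphM /= map_polyX map_polyC /= hornerMXaddC.
  by apply: QD; [apply: Qx | apply: QC].
move=> A.
have -> : eval2 iota x y A = (map_poly (horner_morph cf) A).[y] by [].
elim/poly_ind: A => [|A c IH]; first by rewrite map_poly0 horner0.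
rewrite rmorphD rmorphM /= map_polyX map_polyC /= hornerMXaddC.
by apply: QD; [apply: Qy | apply: inner].
Qed.


Lemma SratX z s k : Srat z s -> Srat z (s ^+ k).
Proof.
move=> hs; elim: k => [|k IH]; first by rewrite expr0 -(rmorph1 iota); apply: SratC.
by rewrite exprS; apply: SratM.
Qed.

Lemma approxX z f k : vge w f 0 -> approx z f -> approx z (f ^+ k).
Proof.
move=> f0 hf; elim: k => [|k IH]; first by rewrite expr0 -(rmorph1 iota); apply/approxS/SratC.
rewrite exprS; apply: approxM => //.
by have := vgeX k f0; rewrite mulr0.
Qed.

Lemma vgeX0 f k : vge w f 0 -> vge w (f ^+ k) 0.
Proof. by move=> h; have := vgeX k h; rewrite mulr0. Qed.


Lemma vge_inv0 f : f != 0 -> w f = 0 -> vge w f^-1 0.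
Proof. by move=> f0 wf; right; rewrite wV // wf oppr0. Qed.

Lemma w_unitX f k : f != 0 -> w f = 0 -> w (f ^+ k) = 0.
Proof. by move=> f0 wf; rewrite wX // wf mulr0. Qed.

Lemma vge1 : vge w 1 0.
Proof. by right; rewrite w1. Qed.

Lemma unit_close f s (k : nat) : f != 0 -> w f = 0 -> vge w (f - s) k%:Z -> (0 < k)%N ->
  s != 0 /\ w s = 0.
Proof.
move=> f0 wf h k0.
have h' : vge w (- (f - s)) (w f + 1).
  by apply: vgeN; rewrite wf add0r; apply: (vge_le h); lia.
have [s0 ws] := w_strict f0 h'.
by rewrite opprB addrC subrK wf in s0 ws.
Qed.

Lemma vge_ge0 f : f != 0 -> vge w f 0 -> 0 <= w f.
Proof. by move=> f0 h; apply: vge_w. Qed.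

End Val.

Lemma int_unit (d t : int) : 0 < t -> d * t = 1 -> t = 1.
Proof.
move=> t0 h; have [d0|d0] := lerP d 0.
  have : d * t <= 0 by rewrite pmulr_lle0.
  by rewrite h.
have : t <= d * t by rewrite ler_peMl // ?ltW //; lia.
lia.
Qed.

Ltac prune_ctx := (repeat match goal with H := _ |- _ => clearbody H end);
  (repeat match goal with H : _ |- _ => clear H end).
Ltac plia := prune_ctx; intros; lia.
Ltac pnia := prune_ctx; intros; nia.

Section Curve.
Variables (K : closedFieldType) (F : fieldType) (iota : {rmorphism K -> F}).
Variables (x y : F) (p n m : nat).
Hypothesis hp : p \in [pchar K].
Hypothesis hm3 : (3 * m = (p ^ n).+1)%N.
Hypothesis htr : forall P : {poly K}, P != 0 -> (map_poly iota P).[x] != 0.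
Hypothesis heq : y ^+ (p ^ n).+1 + x ^+ (2 * m) + x ^+ m = 0.
Hypothesis hgen : forall g : F, exists A B : {poly {poly K}},
        eval2 iota x y B != 0 /\ g = eval2 iota x y A / eval2 iota x y B.

Lemma hpF : p \in [pchar F].
Proof. exact: rmorph_pchar hp. Qed.

Lemma q_gt1 : (1 < p ^ n)%N.
Proof.
have pp : prime p by case/andP: hp.
have : (0 < p ^ n)%N by rewrite expn_gt0 prime_gt0.
lia.
Qed.

Lemma x_neq0 : x != 0.
Proof. by have := @htr 'X; rewrite map_polyX hornerX; apply; rewrite polyX_eq0. Qed.

Lemma eqy : y ^+ (p ^ n).+1 = - (x ^+ (2 * m) + x ^+ m).
Proof. by apply/eqP; rewrite -addr_eq0 addrA heq. Qed.

Lemma m_gt0 : (0 < m)%N.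
Proof. by have := q_gt1; lia. Qed.

Lemma S_neq0 : x ^+ (2 * m) + x ^+ m != 0.
Proof.
have hP : ('X^(2 * m) + 'X^m : {poly K}) != 0.
  rewrite -size_poly_eq0 size_addl ?size_polyXn //; have := m_gt0; lia.
by have := htr hP; rewrite rmorphD /= !map_polyXn hornerD !hornerXn.
Qed.

Lemma y_neq0 : y != 0.
Proof.
apply/negP => /eqP y0; have := eqy; rewrite y0 expr0n /= => /eqP.
by rewrite eq_sym oppr_eq0 (negPf S_neq0).
Qed.

Lemma place_inf_t w : is_place iota w -> w x < 0 ->
  exists t : int, 0 < t /\ w x = - 3 * t /\ w y = - 2 * t.
Proof.
move=> Hw wx.
have x0 := x_neq0; have y0 := y_neq0; have m0 := m_gt0.
have a0 : x ^+ (2 * m) != 0 by rewrite expf_neq0.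
have hb : vge w (x ^+ m) (w (x ^+ (2 * m)) + 1).
  right; rewrite !(wX Hw) //; rewrite PoszM; nia.
have [_ hs] := w_strict Hw a0 hb.
have hy : ((p ^ n).+1)%:Z * w y = (2 * m)%N%:Z * w x.
  by rewrite -!(wX Hw) // eqy (wN Hw) ?hs // S_neq0.
rewrite -hm3 !PoszM in hy.
have h3 : 3 * w y = 2 * w x.
  apply: (@mulfI _ (m%:Z)); first by apply/eqP; lia.
  move: hy; rewrite !mulrA (mulrC m%:Z 3) (mulrC m%:Z 2).
  done.
exists (w y - w x); lia.
Qed.

Lemma place_inf w : is_place iota w -> w x < 0 -> w x = - 3 /\ w y = - 2.
Proof.
move=> Hw wx; have [t [t0 [ex ey]]] := place_inf_t Hw wx.
suff t1 : t = 1 by rewrite ex ey t1.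
have x0 := x_neq0; have y0 := y_neq0; have m0 := m_gt0.
set X := x^-1; set Y := y / x; set U := Y ^+ 3 * x.
have X0 : X != 0 by rewrite invr_eq0.
have Y0 : Y != 0 by rewrite mulf_neq0.
have U0 : U != 0 by rewrite mulf_neq0 ?expf_neq0.
have wX_ : w X = 3 * t by rewrite (wV Hw) // ex; ring.
have wY : w Y = t by rewrite (wM Hw) // wX_ ey; ring.
have wU : w U = 0 by rewrite (wM Hw) ?expf_neq0 // (wX Hw) // wY ex; ring.
have iX : vge w X 0 by right; lia.
have iY : vge w Y 0 by right; lia.
have iU : vge w U 0 by right; lia.
have hYc : vge w (Y - iota 0) 1 by rewrite rmorph0 subr0; right; lia.
have hYT : Y - iota 0 != 0 by rewrite rmorph0 subr0.
have key : (y ^+ 3) ^+ m = - ((x ^+ m) ^+ 2 + x ^+ m).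
  by rewrite -exprM hm3 eqy mulnC exprM.
have hUm : U ^+ m = - (1 + X ^+ m).
  rewrite /U /Y /X !exprMn exprVn.
  have c0 : x ^+ m != 0 by rewrite expf_neq0.
  rewrite -exprAC in key.
  move: key; set a := y ^+ m; set c := x ^+ m => key.
  have -> : a * c^-1 * (a * c^-1 * (a * c^-1)) * c = a ^+ 3 * (c^-1) ^+ 3 * c by ring.
  rewrite key; field => //.
have hYX : Y ^+ (3 * m) = U ^+ m * X ^+ m.
  by rewrite -exprMn /U /X mulfK // exprM.
set Phi := fun s : F => - (1 + Y ^+ (3 * m) * (s ^+ m)^-1) ^+ 3 * (s ^+ (p ^ n))^-1.
have fixU : U = Phi U.
  have e1 : 1 + Y ^+ (3 * m) * (U ^+ m)^-1 = - U ^+ m.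
    rewrite hYX mulrAC mulfV ?expf_neq0 // mul1r hUm; ring.
  rewrite /Phi e1.
  have -> : - (- U ^+ m) ^+ 3 = U ^+ m ^+ 3 by ring.
  by rewrite -exprM mulnC hm3 exprS mulfK // expf_neq0.
have pF := hpF.
have q2 := q_gt1.
have step : forall s (k : nat), Srat iota Y s -> vge w (U - s) k%:Z -> (0 < k)%N ->
    Srat iota Y (Phi s) /\ vge w (U - Phi s) k.+1%:Z.
  move=> s k hs hk k0.
  have [s0 ws] := unit_close Hw U0 wU hk k0.
  have is0 : vge w s 0 by right; rewrite ws.
  split.
    apply: SratM; last by apply/SratV/SratX.
    apply/SratN/SratX/SratD; first by rewrite -(rmorph1 iota); apply: SratC.
    by apply: SratM; [apply/SratX/Srat_z | apply/SratV/SratX].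
  rewrite {1}fixU /Phi.
  set A := 1 + Y ^+ (3 * m) * (U ^+ m)^-1.
  set B := 1 + Y ^+ (3 * m) * (s ^+ m)^-1.
  have Um0 : U ^+ m != 0 by rewrite expf_neq0.
  have sm0 : s ^+ m != 0 by rewrite expf_neq0.
  have Uq0 : U ^+ (p ^ n) != 0 by rewrite expf_neq0.
  have sq0 : s ^+ (p ^ n) != 0 by rewrite expf_neq0.
  have iA : vge w A 0.
    apply: (vgeD Hw); first exact: (vge1 Hw).
    have := vgeM Hw (vgeX0 Hw (3 * m) iY) (vge_inv0 Hw Um0 (w_unitX Hw m U0 wU)).
    by rewrite addr0.
  have iB : vge w B 0.
    apply: (vgeD Hw); first exact: (vge1 Hw).
    have := vgeM Hw (vgeX0 Hw (3 * m) iY) (vge_inv0 Hw sm0 (w_unitX Hw m s0 ws)).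
    by rewrite addr0.
  have hAB : vge w (A - B) k.+1%:Z.
    have -> : A - B = Y ^+ (3 * m) * ((s ^+ m - U ^+ m) * (U ^+ m * s ^+ m)^-1).
      by rewrite /A /B; field; apply/andP.
    have h1 : vge w (Y ^+ (3 * m)) 1.
      right; rewrite (wX Hw) // wY.
      by move: m0 t0; rewrite PoszM; pnia.
    have h2 : vge w (s ^+ m - U ^+ m) k%:Z.
      rewrite -opprB; apply: (vgeN Hw); apply: (powdiff Hw) => //.
    have h3 : vge w (U ^+ m * s ^+ m)^-1 0.
      apply: (vge_inv0 Hw); first by rewrite mulf_neq0.
      rewrite (wM Hw) // (w_unitX Hw m U0 wU).
      by rewrite (w_unitX Hw m s0 ws) addr0.
    have := vgeM Hw h1 (vgeM Hw h2 h3); rewrite addr0 => h.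
    by apply: (vge_le h); plia.
  have hAB3 : vge w (A ^+ 3 - B ^+ 3) k.+1%:Z by apply: (powdiff Hw).
  have hinv : vge w ((U ^+ (p ^ n))^-1 - (s ^+ (p ^ n))^-1) k.+1%:Z.
    have -> : (U ^+ (p ^ n))^-1 - (s ^+ (p ^ n))^-1 =
        (- (U ^+ (p ^ n) - s ^+ (p ^ n))) * (U ^+ (p ^ n) * s ^+ (p ^ n))^-1.
      by field; apply/andP.
    have h2 := vgeN Hw (frobdiff Hw n pF hk).
    have h3 : vge w (U ^+ (p ^ n) * s ^+ (p ^ n))^-1 0.
      apply: (vge_inv0 Hw); first by rewrite mulf_neq0.
      rewrite (wM Hw) // (w_unitX Hw _ U0 wU).
      by rewrite (w_unitX Hw _ s0 ws) addr0.
    have := vgeM Hw h2 h3; rewrite addr0 => h.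
    apply: (vge_le h); rewrite -PoszM lez_nat.
    have : (2 * k <= p ^ n * k)%N by rewrite leq_mul2r q2 orbT.
    move: k0; plia.
  have -> : - A ^+ 3 * (U ^+ (p ^ n))^-1 - - B ^+ 3 * (s ^+ (p ^ n))^-1 =
    - (A ^+ 3 * ((U ^+ (p ^ n))^-1 - (s ^+ (p ^ n))^-1) +
       (A ^+ 3 - B ^+ 3) * (s ^+ (p ^ n))^-1) by ring.
  apply: (vgeN Hw); apply: (vgeD Hw).
    by have := vgeM Hw (vgeX0 Hw 3 iA) hinv; rewrite add0r.
  have := vgeM Hw hAB3 (vge_inv0 Hw sq0 (w_unitX Hw _ s0 ws)); by rewrite addr0.
have init : exists s, Srat iota Y s /\ vge w (U - s) 1.
  have [r hr] := closed_field_poly_normal ('X^m + 1 : {poly K}).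
  have P0 : ('X^m + 1 : {poly K}) != 0.
    by rewrite -size_poly_eq0 size_addl ?size_polyXn ?size_poly1 //; move: m0; plia.
  have lc0 : lead_coef ('X^m + 1 : {poly K}) != 0 by rewrite lead_coef_eq0.
  have ev1 : (map_poly iota ('X^m + 1)).[U] = U ^+ m + 1.
    by rewrite rmorphD rmorph1 /= map_polyXn hornerD hornerXn hornerC.
  have ev2 : (map_poly iota ('X^m + 1)).[U] =
      iota (lead_coef ('X^m + 1)) * \prod_(z <- r) (U - iota z).
    rewrite {1}hr map_polyZ hornerZ rmorph_prod /= horner_prod.
    by congr (_ * _); apply: eq_bigr => z _; rewrite map_polyXsubC hornerXsubC.
  have hv : vge w (U ^+ m + 1) 1.
    have -> : U ^+ m + 1 = - X ^+ m by rewrite hUm; ring.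
    apply: (vgeN Hw); right; rewrite (wX Hw) // wX_.
    by move: m0 t0; pnia.
  case: (boolP (has (fun z => (U - iota z == 0) || (1 <= w (U - iota z))) r)).
    case/hasP=> z _ /orP hz; exists (iota z); split; first exact: SratC.
    by case: hz => [/eqP ->|]; [left | right].
  move/hasPn=> hn.
  have : \prod_(z <- r) (U - iota z) != 0 /\ w (\prod_(z <- r) (U - iota z)) = 0.
    elim: r {hr ev2} hn => [|z r IH] hn; first by rewrite big_nil oner_neq0 (w1 Hw).
    rewrite big_cons.
    have := hn z (mem_head _ _); rewrite negb_or => /andP[hz1 hz2].
    have hn' : {in r, forall t2, ~~ ((U - iota t2 == 0) || (1 <= w (U - iota t2)))}.
      by move=> t2 ht; apply: hn; rewrite inE ht orbT.
    have [IH1 IH2] := IH hn'.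
    split; first by rewrite mulf_neq0.
    rewrite (wM Hw) // IH2 addr0.
    have : 0 <= w (U - iota z).
      apply: (vge_ge0 hz1); apply: (vgeB Hw) => //; exact: (vgeC Hw).
    by move: hz2; plia.
  move=> [pr0 wpr].
  have e0 : U ^+ m + 1 != 0 by rewrite -ev1 ev2 mulf_neq0 // fmorph_eq0.
  have := vge_w e0 hv; rewrite -ev1 ev2 (wM Hw) ?fmorph_eq0 // (wC Hw) // wpr.
  by [].
have aU : approx iota w Y U by apply: (approx_iter init step).
have aX : approx iota w Y X.
  have -> : X = Y ^+ 3 * U^-1 by rewrite /U invfM mulrA mulfV ?expf_neq0 // mul1r.
  apply: (approxM Hw); first exact: (vgeX0 Hw 3 iY).
    exact: (vge_inv0 Hw U0 wU).
  exact/approxS/SratX/Srat_z.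
  exact: (approxV Hw U0 wU aU).
have xX : X * x = 1 by rewrite mulVf.
have a0 : approx iota w Y 0 by rewrite -(rmorph0 iota); apply/approxS/SratC.
pose good f := exists D : nat, forall E : nat, (D <= E)%N ->
  approx iota w Y (X ^+ E * f) /\ vge w (X ^+ E * f) 0.
have aXE : forall E, approx iota w Y (X ^+ E) by move=> E; apply: (approxX Hw).
have iXE : forall E, vge w (X ^+ E) 0 by move=> E; apply: (vgeX0 Hw).
have gall : forall A, good (eval2 iota x y A).
  apply: eval2_ind.
  - by exists 0%N => E _; rewrite mulr0; split=> //; left.
  - move=> c; exists 0%N => E _; split.
      by apply: (approxM Hw) => //; [exact: (vgeC Hw) | apply/approxS/SratC].
    by have := vgeM Hw (iXE E) (vgeC Hw c); rewrite addr0.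
  - move=> f g [D1 h1] [D2 h2]; exists (maxn D1 D2) => E hE.
    have [h1a h1b] := h1 E (leq_trans (leq_maxl _ _) hE).
    have [h2a h2b] := h2 E (leq_trans (leq_maxr _ _) hE).
    by rewrite mulrDr; split; [apply: approxD | apply: (vgeD Hw)].
  - move=> f [D h]; exists D.+1 => [[|E]] hE //.
    have -> : X ^+ E.+1 * (f * x) = X ^+ E * f by rewrite exprSr -!mulrA; congr (_ * _); rewrite mulrCA xX mulr1.
    exact: h.
  - move=> f [D h]; exists D.+1 => [[|E]] hE //.
    have -> : X ^+ E.+1 * (f * y) = X ^+ E * f * Y.
      by rewrite exprSr /Y /X; field.
    have [ha hb] := h E hE.
    split; last by have := vgeM Hw hb iY; rewrite addr0.
    by apply: (approxM Hw) => //; apply/approxS/Srat_z.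
have [_ _ _ [t1 [t10 wt1]]] := Hw.
have [A [B [hB et1]]] := hgen t1.
have [DA hA] := gall A; have [DB hB'] := gall B.
set E := maxn DA DB.
have [hA1 hA2] := hA E (leq_maxl _ _).
have [hB1 hB2] := hB' E (leq_maxr _ _).
have eA0 : eval2 iota x y A != 0.
  by apply: contraNneq t10 => e; rewrite et1 e mul0r.
have XE0 : X ^+ E != 0 by rewrite expf_neq0.
have nA : X ^+ E * eval2 iota x y A != 0 by rewrite mulf_neq0.
have nB : X ^+ E * eval2 iota x y B != 0 by rewrite mulf_neq0.
have [kA ekA] := approx_val Hw iY hYc hYT nA hA1.
have [kB ekB] := approx_val Hw iY hYc hYT nB hB1.
have e2 : t1 = (X ^+ E * eval2 iota x y A) / (X ^+ E * eval2 iota x y B).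
  by rewrite et1; field; apply/andP.
move: wt1; rewrite e2 (wM Hw) ?invr_neq0 // (wV Hw) // ekA ekB rmorph0 subr0 wY.
move=> h; apply: (int_unit (d := kA - kB) t0); rewrite -h; ring.
Qed.

Lemma place_P w a b : is_place iota w -> a != 0 -> 1 + a ^+ m != 0 ->
  0 < w (x - iota a) -> 0 < w (y - iota b) ->
  [/\ w (x - iota a) = 1, b != 0 & b ^+ (p ^ n).+1 + a ^+ (2 * m) + a ^+ m = 0].
Proof.
move=> Hw a0 am1 wxa wyb.
have T0 : x - iota a != 0.
  have := @htr ('X - a%:P); rewrite map_polyXsubC hornerXsubC; apply.
  by rewrite polyXsubC_eq0.
have hxa : vge w (x - iota a) 1 by right; move: wxa; plia.
have hyb : vge w (y - iota b) 1 by right; move: wyb; plia.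
have hx : vge w x 0.
  have -> : x = (x - iota a) + iota a by rewrite subrK.
  by apply: (vgeD Hw); [apply: (vge_le hxa) | apply: (vgeC Hw)].
have hy : vge w y 0.
  have -> : y = (y - iota b) + iota b by rewrite subrK.
  by apply: (vgeD Hw); [apply: (vge_le hyb) | apply: (vgeC Hw)].
have cst : b ^+ (p ^ n).+1 + a ^+ (2 * m) + a ^+ m = 0.
  apply: (vge_const Hw).
  have -> : iota (b ^+ (p ^ n).+1 + a ^+ (2 * m) + a ^+ m) =
     - ((y ^+ (p ^ n).+1 - (iota b) ^+ (p ^ n).+1) + (x ^+ (2 * m) - (iota a) ^+ (2 * m))
        + (x ^+ m - (iota a) ^+ m)).
    rewrite !rmorphD !rmorphXn /=; apply/eqP; rewrite -subr_eq0; apply/eqP; rewrite -heq; ring.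
  apply: (vgeN Hw); apply: (vgeD Hw); first apply: (vgeD Hw).
  - by apply: (powdiff Hw) => //; apply: (vgeC Hw).
  - by apply: (powdiff Hw) => //; apply: (vgeC Hw).
  - by apply: (powdiff Hw) => //; apply: (vgeC Hw).
have b0 : b != 0.
  apply: contraNneq am1 => b0; move: cst; rewrite b0 expr0n /= add0r mulnC exprM.
  by move/eqP; rewrite -{2}(mulr1 (a ^+ m)) -mulrDr mulf_eq0 expf_eq0 (negPf a0) andbF /= addrC.
split=> //.
have ib0 : iota b != 0 by rewrite fmorph_eq0.
have hyb' : vge w (y - iota b) (w (iota b) + 1) by rewrite (wC Hw) // add0r.
have [y0 wy] := w_strict Hw ib0 hyb'.
rewrite addrC subrK (wC Hw) // in y0 wy.
have pF := hpF; have q2 := q_gt1.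
set S := x ^+ (2 * m) + x ^+ m.
have iS : vge w S 0 by apply: (vgeD Hw); apply: (vgeX0 Hw).
set Phi := fun s : F => - S * (s ^+ (p ^ n))^-1.
have fixy : y = Phi y.
  by rewrite /Phi -eqy exprS mulfK // expf_neq0.
have step : forall s (k : nat), Srat iota x s -> vge w (y - s) k%:Z -> (0 < k)%N ->
    Srat iota x (Phi s) /\ vge w (y - Phi s) k.+1%:Z.
  move=> s k hs hk k0.
  have [s0 ws] := unit_close Hw y0 wy hk k0.
  split.
    apply: SratM; last by apply/SratV/SratX.
    by apply/SratN/SratD; apply/SratX/Srat_z.
  have yq0 : y ^+ (p ^ n) != 0 by rewrite expf_neq0.
  have sq0 : s ^+ (p ^ n) != 0 by rewrite expf_neq0.
  rewrite {1}fixy /Phi.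
  have -> : - S * (y ^+ (p ^ n))^-1 - - S * (s ^+ (p ^ n))^-1 =
      S * ((y ^+ (p ^ n) - s ^+ (p ^ n)) * (y ^+ (p ^ n) * s ^+ (p ^ n))^-1).
    by field; apply/andP.
  have h2 := frobdiff Hw n pF hk.
  have h3 : vge w (y ^+ (p ^ n) * s ^+ (p ^ n))^-1 0.
    apply: (vge_inv0 Hw); first by rewrite mulf_neq0.
    by rewrite (wM Hw) // (w_unitX Hw _ y0 wy) (w_unitX Hw _ s0 ws) addr0.
  have := vgeM Hw iS (vgeM Hw h2 h3); rewrite addr0 add0r => h.
  apply: (vge_le h); rewrite -PoszM lez_nat.
  have : (2 * k <= p ^ n * k)%N by rewrite leq_mul2r q2 orbT.
  move: k0; plia.
have init : exists s, Srat iota x s /\ vge w (y - s) 1 by exists (iota b); split=> //; apply: SratC.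
have ay : approx iota w x y by apply: (approx_iter init step).
have ax : approx iota w x x by apply/approxS/Srat_z.
pose good f := approx iota w x f /\ vge w f 0.
have gall : forall A, good (eval2 iota x y A).
  apply: eval2_ind.
  - by split; [rewrite -(rmorph0 iota); apply/approxS/SratC | left].
  - by move=> c; split; [apply/approxS/SratC | apply: (vgeC Hw)].
  - by move=> f g [h1 h2] [h3 h4]; split; [apply: approxD | apply: (vgeD Hw)].
  - move=> f [h1 h2]; split; first by apply: (approxM Hw).
    by have := vgeM Hw h2 hx; rewrite addr0.
  - move=> f [h1 h2]; split; first by apply: (approxM Hw).
    by have := vgeM Hw h2 hy; rewrite addr0.
have [_ _ _ [t1 [t10 wt1]]] := Hw.
have [A [B [hB et1]]] := hgen t1.
have [hA1 hA2] := gall A; have [hB1 hB2] := gall B.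
have eA0 : eval2 iota x y A != 0.
  by apply: contraNneq t10 => e; rewrite et1 e mul0r.
have [kA ekA] := approx_val Hw hx hxa T0 eA0 hA1.
have [kB ekB] := approx_val Hw hx hxa T0 hB hB1.
move: wt1; rewrite et1 (wM Hw) ?invr_neq0 // (wV Hw) // ekA ekB.
move=> h; apply: (int_unit (d := kA - kB) wxa); rewrite -h; ring.
Qed.
End Curve.
Definition Ek (R : comRingType) (k : nat) (X1 Y1 : R) : R :=
  X1 ^+ (k %/ 3)%N *
  (if (k %% 3 == 0)%N then Y1 + 1 else if (k %% 3 == 1)%N then X1 + Y1 else Y1 ^+ 2 - X1).

Lemma Ek_id (R : comRingType) (r : R) k :
  (r ^+ 2 + r + 1) * r ^+ k = Ek k (r ^+ 3) (r ^+ 2 + r).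
Proof.
rewrite /Ek {1}(divn_eq k 3) exprD mulnC exprM.
have : (k %% 3 < 3)%N by rewrite ltn_mod.
case: (k %% 3)%N => [|[|[|j]]] //= _; ring.
Qed.

Definition Gf (R : comRingType) (N : nat) (u X1 Y1 : R) : R :=
  \sum_(k < N.+1) ((- u) ^+ (N - k) *+ 'C(N, k)) * Ek k X1 Y1.

Lemma Gf_id (R : comRingType) N (u r : R) :
  Gf N u (r ^+ 3) (r ^+ 2 + r) = (r - u) ^+ N * (r ^+ 2 + r + 1).
Proof.
rewrite /Gf [r - u]addrC exprDn mulr_suml; apply: eq_bigr => k _.
rewrite -Ek_id; rewrite -!mulrnAl; ring.
Qed.

Section Bounds.
Variables (K F : fieldType) (iota : {rmorphism K -> F}) (w : F -> int).
Hypothesis Hw : is_place iota w.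

Lemma diffM a b c d N : vge w a 0 -> vge w d 0 -> vge w (a - b) N -> vge w (c - d) N ->
  vge w (a * c - b * d) N.
Proof.
move=> ha hd h1 h2.
have -> : a * c - b * d = a * (c - d) + (a - b) * d by ring.
apply: (vgeD Hw); first by have := vgeM Hw ha h2; rewrite add0r.
by have := vgeM Hw h1 hd; rewrite addr0.
Qed.

Lemma Ek_diff k X1 Y1 X2 Y2 N : vge w X1 0 -> vge w Y1 0 -> vge w X2 0 -> vge w Y2 0 ->
  vge w (X1 - X2) N -> vge w (Y1 - Y2) N -> vge w (Ek k X1 Y1 - Ek k X2 Y2) N.
Proof.
move=> h1 h2 h3 h4 hX hY.
have o : vge w 1 0 := vge1 Hw.
rewrite /Ek; apply: diffM.
- exact: (vgeX0 Hw).
- case: ifP => _; first by apply: (vgeD Hw).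
  case: ifP => _; first by apply: (vgeD Hw).
  by apply: (vgeB Hw) => //; apply: (vgeX0 Hw).
- exact: (powdiff Hw).
case: ifP => _.
  by have -> : Y1 + 1 - (Y2 + 1) = Y1 - Y2 by ring.
case: ifP => _.
  have -> : X1 + Y1 - (X2 + Y2) = (X1 - X2) + (Y1 - Y2) by ring.
  exact: (vgeD Hw).
have -> : Y1 ^+ 2 - X1 - (Y2 ^+ 2 - X2) = (Y1 ^+ 2 - Y2 ^+ 2) - (X1 - X2) by ring.
by apply: (vgeB Hw) => //; apply: (powdiff Hw).
Qed.

Lemma Ek_low k X1 Y1 : vge w X1 (-3) -> vge w Y1 (-2) ->
  vge w (Ek k X1 Y1) (- (k%:Z + 2)).
Proof.
move=> hX hY.
have o : vge w 1 0 := vge1 Hw.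
rewrite /Ek.
have := vgeX Hw (k %/ 3) hX => hXk.
have hk : k = (k %/ 3 * 3 + k %% 3)%N := divn_eq k 3.
have : (k %% 3 < 3)%N by rewrite ltn_mod.
move: hk; case: (k %% 3)%N => [|[|[|j]]] //= hk _.
- have h : vge w (Y1 + 1) (-2) by apply: (vgeD Hw) => //; apply: (vge_le o).
  have := vgeM Hw hXk h; move=> h'; apply: (vge_le h'); move: hk; plia.
- have h : vge w (X1 + Y1) (-3) by apply: (vgeD Hw) => //; apply: (vge_le hY).
  have := vgeM Hw hXk h; move=> h'; apply: (vge_le h'); move: hk; plia.
- have h : vge w (Y1 ^+ 2 - X1) (-4).
    apply: (vgeB Hw); last by apply: (vge_le hX).
    by have := vgeX Hw 2 hY.
  have := vgeM Hw hXk h; move=> h'; apply: (vge_le h'); move: hk; plia.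
Qed.


Lemma Ek_int k X1 Y1 : vge w X1 0 -> vge w Y1 0 -> vge w (Ek k X1 Y1) 0.
Proof.
move=> hX hY; have o : vge w 1 0 := vge1 Hw.
rewrite /Ek; have := vgeM Hw (vgeX0 Hw (k %/ 3)%N hX) (_ : vge w _ 0); rewrite addr0; apply.
case: ifP => _; first by apply: (vgeD Hw).
case: ifP => _; first by apply: (vgeD Hw).
by apply: (vgeB Hw) => //; apply: (vgeX0 Hw).
Qed.

Lemma coefC N k u0 : (- iota u0) ^+ (N - k) *+ 'C(N, k) = iota ((- u0) ^+ (N - k) *+ 'C(N, k)).
Proof. by rewrite rmorphMn rmorphXn rmorphN. Qed.

Lemma Gf_low N u0 X1 Y1 : vge w X1 (-3) -> vge w Y1 (-2) ->
  vge w (Gf N (iota u0) X1 Y1) (- (N%:Z + 2)).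
Proof.
move=> hX hY; rewrite /Gf; apply: (vge_sum Hw) => k _.
rewrite coefC; have := vgeM Hw (vgeC Hw ((- u0) ^+ (N - k) *+ 'C(N, k))) (Ek_low k hX hY).
rewrite add0r => h; apply: (vge_le h).
have := ltn_ord k; plia.
Qed.

Lemma Gf_int N u0 X1 Y1 : vge w X1 0 -> vge w Y1 0 -> vge w (Gf N (iota u0) X1 Y1) 0.
Proof.
move=> hX hY; rewrite /Gf; apply: (vge_sum Hw) => k _.
rewrite coefC; have := vgeM Hw (vgeC Hw ((- u0) ^+ (N - k) *+ 'C(N, k))) (Ek_int k hX hY).
by rewrite add0r.
Qed.

Lemma Gf_diff N u0 X1 Y1 X2 Y2 M : vge w X1 0 -> vge w Y1 0 -> vge w X2 0 -> vge w Y2 0 ->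
  vge w (X1 - X2) M -> vge w (Y1 - Y2) M ->
  vge w (Gf N (iota u0) X1 Y1 - Gf N (iota u0) X2 Y2) M.
Proof.
move=> h1 h2 h3 h4 hX hY; rewrite /Gf -sumrB; apply: (vge_sum Hw) => k _.
rewrite -mulrBr coefC.
have := vgeM Hw (vgeC Hw ((- u0) ^+ (N - k) *+ 'C(N, k))) (Ek_diff k h1 h2 h3 h4 hX hY).
by rewrite add0r.
Qed.

End Bounds.

End Helpers.
Import Helpers.

Theorem theorem3p10 (K : closedFieldType) (p n : nat) (F : fieldType)
  (iota : {rmorphism K -> F}) (x y : F) (a b : K) (vP : F -> int) (i : nat) :
  prime p -> p \in [pchar K] -> (0 < n)%N -> ((p ^ n) %% 3 = 2)%N ->
  curve_function_field iota x y (p ^ n) ((p ^ n).+1 %/ 3) ->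
  (* P = P_(a,b): a place with x(P) = a, y(P) = b, a <> 0 *)
  a != 0 -> is_place iota vP ->
  0 < vP (x - iota a) -> 0 < vP (y - iota b) ->
  (* alpha(P) = a^m/(1+a^m) is defined and alpha^2 - alpha + 1 = 0 *)
  1 + a ^+ ((p ^ n).+1 %/ 3) != 0 ->
  (a ^+ ((p ^ n).+1 %/ 3) / (1 + a ^+ ((p ^ n).+1 %/ 3))) ^+ 2
    - a ^+ ((p ^ n).+1 %/ 3) / (1 + a ^+ ((p ^ n).+1 %/ 3)) + 1 = 0 ->
  (0 < i)%N -> (i <= (p ^ n).+1 %/ 3 - 2)%N ->
  exists g : F, in_L_kDinf iota x (3 * i + 3) g /\ g != 0 /\
    vP g = (3 * i + 2)%:Z.
Proof.
move=> pp hp n0 hq3 hcf a0 Hw hxa hyb am1 halpha i0 hi.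
have [htr heq hgen] := hcf.
set m := ((p ^ n).+1 %/ 3)%N in heq hgen am1 halpha hi htr hcf *.
have hm3 : (3 * m = (p ^ n).+1)%N.
  by rewrite /m; move: hq3; move: (p ^ n)%N => Q; plia.
have [d1 b0 cst] := place_P hp hm3 htr heq hgen Hw a0 am1 hxa hyb.
set u := a ^+ m in am1 halpha cst.
have hu : u ^+ 2 + u + 1 = 0.
  have -> : u ^+ 2 + u + 1 = ((u / (1 + u)) ^+ 2 - u / (1 + u) + 1) * (1 + u) ^+ 2.
    by field.
  by rewrite halpha mul0r.
have three0 : (3%:R : K) != 0.
  rewrite -(dvdn_pcharf hp) dvdn_prime2 //.
  apply/eqP => p3; move: hq3; rewrite p3.
  have : (3 %| 3 ^ n)%N by rewrite dvdn_exp.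
  by rewrite /dvdn => /eqP ->.
have uu : u - u ^+ 2 != 0.
  apply/eqP => e.
  have e2 : u ^+ 2 = u by apply/eqP; rewrite eq_sym -subr_eq0 e.
  have : u * (u - 1) = 0 by rewrite mulrBr mulr1 -expr2 e2 subrr.
  move/eqP; rewrite mulf_eq0 => /orP[/eqP u0|].
    by move: hu; rewrite u0 expr0n /= !add0r => /eqP; rewrite oner_eq0.
  rewrite subr_eq0 => /eqP u1; move: hu; rewrite u1 expr1n => h.
  have e3 : (3%:R : K) = 1 + 1 + 1 by ring.
  by move: three0; rewrite e3 h eqxx.
have m0 : (m%:R : K) != 0.
  rewrite -(dvdn_pcharf hp); apply/negP => pm.
  have h1 : (p %| (p ^ n).+1)%N by rewrite -hm3 dvdn_mull.
  have h2 : (p %| p ^ n)%N by rewrite dvdn_exp.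
  move: h1; rewrite -addn1 dvdn_addr // dvdn1 => /eqP p1.
  by move: pp; rewrite p1.
have pF : p \in [pchar F] := rmorph_pchar iota hp.
have x0 := x_neq0 htr.
have y0 := y_neq0 hp hm3 htr heq.
pose N := (3 * i + 1)%N.
pose X1 := x * iota (a ^+ (p ^ n)).
pose Y1 := - iota (b ^+ (p ^ n)) * y.
pose g := Gf N (iota u) X1 Y1.
have aq0 : iota (a ^+ (p ^ n)) != 0 by rewrite fmorph_eq0 expf_neq0.
have bq0 : iota (b ^+ (p ^ n)) != 0 by rewrite fmorph_eq0 expf_neq0.
have hS : x ^+ (2 * m) + x ^+ m = - y ^+ (p ^ n).+1 by rewrite (eqy heq) opprK.
have hvP : g != 0 /\ vP g = (3 * i + 2)%:Z.
  have hxa1 : vge vP (x - iota a) 1 by right; rewrite d1.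
  have hyb1 : vge vP (y - iota b) 1 by right; move: hyb; plia.
  have hx : vge vP x 0.
    have -> : x = (x - iota a) + iota a by rewrite subrK.
    by apply: (vgeD Hw); [apply: (vge_le hxa1) | apply: (vgeC Hw)].
  have hy : vge vP y 0.
    have -> : y = (y - iota b) + iota b by rewrite subrK.
    by apply: (vgeD Hw); [apply: (vge_le hyb1) | apply: (vgeC Hw)].
  set r := x ^+ m.
  have hr : vge vP r 0 by apply: (vgeX0 Hw).
  have hX1 : vge vP (X1 - r ^+ 3) (p ^ n)%N%:Z.
    have -> : X1 - r ^+ 3 = - (x * (x ^+ (p ^ n) - (iota a) ^+ (p ^ n))).
      by rewrite /X1 /r rmorphXn -exprM (mulnC m 3) hm3 exprS; ring.
    apply: (vgeN Hw); have := vgeM Hw hx (frobdiff Hw n pF hxa1).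
    by rewrite add0r mulr1.
  have hY1 : vge vP (Y1 - (r ^+ 2 + r)) (p ^ n)%N%:Z.
    have -> : Y1 - (r ^+ 2 + r) = y * (y ^+ (p ^ n) - (iota b) ^+ (p ^ n)).
      rewrite /Y1 /r -exprM (mulnC m 2) hS rmorphXn exprS; ring.
    have := vgeM Hw hy (frobdiff Hw n pF hyb1).
    by rewrite add0r mulr1.
  have iX1 : vge vP X1 0.
    by have := vgeM Hw hx (vgeC Hw (a ^+ (p ^ n))); rewrite addr0.
  have iY1 : vge vP Y1 0.
    by have := vgeM Hw (vgeN Hw (vgeC Hw (b ^+ (p ^ n)))) hy; rewrite addr0.
  have ir3 : vge vP (r ^+ 3) 0 by apply: (vgeX0 Hw).
  have ir2 : vge vP (r ^+ 2 + r) 0 by apply: (vgeD Hw) => //; apply: (vgeX0 Hw).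
  have hgd := Gf_diff Hw N u iX1 iY1 ir3 ir2 hX1 hY1.
  rewrite Gf_id in hgd.
  set U := iota u.
  have hU : U ^+ 2 + U + 1 = 0.
    by rewrite /U -(rmorph1 iota) -rmorphXn -!rmorphD hu rmorph0.
  have fac : r ^+ 2 + r + 1 = (r - U) * (r - U ^+ 2).
    apply/eqP; rewrite -subr_eq0; apply/eqP.
    have -> : r ^+ 2 + r + 1 - (r - U) * (r - U ^+ 2) = (r + 1 - U) * (U ^+ 2 + U + 1).
      by ring.
    by rewrite hU mulr0.
  have hrU : r - U != 0 /\ vP (r - U) = 1.
    pose A := iota a.
    have eU : U = A ^+ m by rewrite /U /u rmorphXn.
    pose Sg := \sum_(k < m) x ^+ (m.-1 - k) * A ^+ k.
    have e1 : r - U = (x - A) * Sg by rewrite eU /r subrXX.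
    pose C := A ^+ m.-1 *+ m.
    have C0 : C != 0.
      rewrite /C -mulr_natl mulf_neq0 ?expf_neq0 ?fmorph_eq0 //.
      by rewrite -(rmorph_nat iota) fmorph_eq0.
    have wC0 : vP C = 0.
      by rewrite /C -rmorphXn -rmorphMn (wC Hw) // -(fmorph_eq0 iota) rmorphMn rmorphXn.
    have eC : C = \sum_(k < m) A ^+ (m.-1 - k) * A ^+ k.
      rewrite /C -[X in _ *+ X]card_ord -sumr_const; apply: eq_bigr => k _.
      rewrite -exprD subnK //; have := ltn_ord k; move: (m0); plia.
    have hd : vge vP (Sg - C) (vP C + 1).
      rewrite wC0 add0r /Sg eC -sumrB; apply: (vge_sum Hw) => k _.
      rewrite -mulrBl; have := vgeM Hw (powdiff Hw (m.-1 - k) hx (vgeC Hw a) hxa1)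
        (vgeX0 Hw k (vgeC Hw a)).
      by rewrite addr0.
    have [Sg0 wSg] := w_strict Hw C0 hd.
    rewrite addrC subrK wC0 in Sg0 wSg.
    have xA0 : x - A != 0.
      have := @htr ('X - a%:P); rewrite map_polyXsubC hornerXsubC; apply.
      by rewrite polyXsubC_eq0.
    rewrite e1; split; first by rewrite mulf_neq0.
    by rewrite (wM Hw) // d1 wSg.
  have hrU2 : r - U ^+ 2 != 0 /\ vP (r - U ^+ 2) = 0.
    have c0 : U - U ^+ 2 != 0 by rewrite /U -rmorphXn -rmorphB fmorph_eq0.
    have hb : vge vP (r - U) (vP (U - U ^+ 2) + 1).
      by right; rewrite /U -rmorphXn -rmorphB (wC Hw) // add0r; case: hrU => _ ->.
    have [h1 h2] := w_strict Hw c0 hb.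
    have e : U - U ^+ 2 + (r - U) = r - U ^+ 2 by ring.
    rewrite e in h1 h2; split => //; rewrite h2 /U -rmorphXn -rmorphB (wC Hw) //.
  case: hrU => rU0 wrU; case: hrU2 => rU20 wrU2.
  set Phi := (r - U) ^+ N * (r ^+ 2 + r + 1) in hgd.
  have Phi0 : Phi != 0 by rewrite /Phi fac !mulf_neq0 // expf_neq0.
  have wPhi : vP Phi = (3 * i + 2)%:Z.
    rewrite /Phi fac (wM Hw) ?expf_neq0 ?mulf_neq0 // (wM Hw) // (wX Hw) //.
    by rewrite wrU wrU2 /N; plia.
  have hb : vge vP (g - Phi) (vP Phi + 1).
    apply: (vge_le hgd); rewrite wPhi.
    move: hi hm3 i0; plia.
  have [g0 wg] := w_strict Hw Phi0 hb.
  by rewrite addrC subrK in g0 wg; split => //; rewrite wg.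
case: hvP => g0 wg.
exists g; split; last by split.
right => w Hw'.
case: ifP => wx.
  have [ex ey] := place_inf hp hm3 htr heq hgen Hw' wx.
  have hX1 : vge w X1 (-3) by right; rewrite /X1 (wM Hw') // (wC Hw') ?expf_neq0 // ex addr0.
  have hY1 : vge w Y1 (-2).
    right; rewrite /Y1 (wM Hw') ?oppr_eq0 // (wN Hw') // (wC Hw') ?expf_neq0 // ey add0r.
    by [].
  have := vge_w g0 (Gf_low Hw' N u hX1 hY1).
  rewrite /N; plia.
have hx : vge w x 0 by right; move: wx; plia.
have hy : vge w y 0.
  right; have hS0 := S_neq0 hp hm3 htr.
  have iS : vge w (x ^+ (2 * m) + x ^+ m) 0.
    by apply: (vgeD Hw'); apply: (vgeX0 Hw').
  have := vge_w hS0 iS; rewrite hS (wN Hw') ?expf_neq0 // (wX Hw') //.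
  plia.
have iX1 : vge w X1 0.
  by have := vgeM Hw' hx (vgeC Hw' (a ^+ (p ^ n))); rewrite addr0.
have iY1 : vge w Y1 0.
  by have := vgeM Hw' (vgeN Hw' (vgeC Hw' (b ^+ (p ^ n)))) hy; rewrite addr0.
exact: (vge_w g0 (Gf_int Hw' N u iX1 iY1)).
Qed.
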